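(* Let $c\ge\lceil(2n-1)/3\rceil$ and let $\mathbf{s}_n\in\mathcal{B}(n,c,d_1)$ with $d_1=n-c$ and $add(\mathbf{s}_n)=t_1$. If there exists an integer $0<b<n$ such that $R^b(\mathbf{s}_n)\in\mathcal{B}(n,c,d_2)$ and $add(R^b(\mathbf{s}_n))=t_2\ge t_1$, then $b=d_2$.
   Context: All sequences are binary (entries in $\mathbb{Z}_2$), $\overline{x}=x\oplus1$, $x\bmod d$ is the least nonnegative residue, and $\mathbf{a}^q$ is the concatenation of $q$ copies of $\mathbf a$. For $\mathbf{s}_n=(s_0,\dots,s_{n-1})$, $\mathbf{s}_j=(s_0,\dots,s_{j-1})$. A length-$m$ sequence is periodic if it is the concatenation of $m/e$ copies of a length-$e$ sequence for a proper divisor $e$ of $m$, aperiodic otherwise. Right circular shift: $R^k(\mathbf{s}_n)=(s_{n-k},\dots,s_{n-1},s_0,\dots,s_{n-k-1})$. For $c\ge\lfloor n/2\rfloor$ and $1\le d\le\min\{n-c,\lfloor n/2\rfloor\}$, $\mathcal{B}(n,c,d)$ is the set of aperiodic length-$n$ sequences $\mathbf{s}_n$ with $\mathbf{s}_d$ aperiodic and $\mathbf{s}_{c+d}=(s_0,\dots,s_{d-1})^q(s_0,\dots,s_{r-1},\overline{s_r})$, where $q=\lfloor(c+d-1)/d\rfloor$, $r=c+d-1-qd$, and $s_{c+d},\dots,s_{n-1}$ are arbitrary. For $\mathbf{s}_n\in\mathcal{B}(n,c,d)$, $add(\mathbf{s}_n)$ is the integer $t\ge0$ such that $s_{n-1-i}=s_{(d-1-i)\bmod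 d}$ for $0\le i<t$ and $s_{n-1-t}\neq s_{(d-1-t)\bmod d}$. *)

(* Defs.v *)
From mathcomp Require Import all_boot all_order all_algebra.
Set Implicit Arguments. Unset Strict Implicit. Unset Printing Implicit Defensive.

Definition at_ (s : seq bool) (i : nat) : bool := nth false s i.

Definition ceildiv (a b : nat) : nat := (a + b - 1) %/ b.

Definition rep (a : seq bool) (q : nat) : seq bool := flatten (nseq q a).

Definition periodic (s : seq bool) : Prop :=
  exists e, [/\ 0 < e, e < size s, e %| size s &
    exists a : seq bool, size a = e /\ s = rep a (size s %/ e)].

Definition aperiodic (s : seq bool) : Prop := ~ periodic s.

(* Right circular shift R^k(s_n) = (s_{n-k},...,s_{n-1},s_0,...,s_{n-k-1}). *)
Definition Rshift (k : nat) (s : seq bool) : seq bool := rotr k s.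

(* membership in B(n,c,d), including the standing parameter constraints
   c >= floor(n/2), 1 <= d <= min(n-c, floor(n/2)). *)
Definition inB (n c d : nat) (s : seq bool) : Prop :=
  let q := (c + d - 1) %/ d in
  let r := c + d - 1 - q * d in
  [/\ n./2 <= c, 1 <= d & d <= minn (n - c) n./2] /\
  [/\ size s = n, aperiodic s, aperiodic (take d s) &
      take (c + d) s = rep (take d s) q ++ (take r s ++ [:: ~~ at_ s r])].

(* add(s_n) = t, with respect to the parameter d of B(n,c,d):
   s_{n-1-i} = s_{(d-1-i) mod d} for 0 <= i < t, and
   s_{n-1-t} <> s_{(d-1-t) mod d}  (index n-1-t must exist, so t < n). *)
Definition modidx (d i : nat) : nat :=
  absz ((d%:Z - 1 - i%:Z) %% d%:Z)%Z.

Definition is_add (s : seq bool) (d t : nat) : Prop :=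
  [/\ t < size s,
      (forall i, i < t -> at_ s (size s - 1 - i) = at_ s (modidx d i)) &
      at_ s (size s - 1 - t) <> at_ s (modidx d t)].

(* Main.v *)
Require Import Defs.
From mathcomp Require Import all_boot all_order all_algebra.
From mathcomp Require Import zify.
From Stdlib Require Import Lia.
Set Implicit Arguments. Unset Strict Implicit.
Lemma size_rep (a : seq bool) q : size (rep a q) = q * size a.
Proof.
elim: q => [|q IH] //=. rewrite /rep /= size_cat. rewrite /rep in IH. rewrite IH. lia.
Qed.

Lemma nth_rep (a : seq bool) q i : i < q * size a ->
  nth false (rep a q) i = nth false a (i %% size a).
Proof.
elim: q i => [|q IH] i; first by rewrite mul0n ltn0.
move=> Hi. rewrite /rep /= nth_cat.
case: ltnP => Hia.
  by rewrite modn_small.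
rewrite -/(rep a q) IH; last by rewrite mulSn in Hi; lia.
by rewrite -{2}(subnK Hia) modnDr.
Qed.

Lemma inB_struct n c d s : inB n c d s ->
  (forall i, i < c + d - 1 -> at_ s i = at_ s (i %% d)) /\
  at_ s (c + d - 1) = ~~ at_ s ((c + d - 1) %% d).
Proof.
move=> [[H1 H2 H3] [Hsz _ _ Htake]].
have Hdn : d <= n - c by move: H3; rewrite leq_min => /andP [].
have Hcd : c + d <= n by lia.
set L := c + d - 1 in Htake *.
set q := L %/ d in Htake. set r := L - q * d in Htake.
have Hr : r = L %% d by rewrite /r /q {1}(divn_eq L d); lia.
have Hrd : r < d by rewrite Hr ltn_mod; lia.
have Hnth : forall i, i < c + d -> at_ s i =
   nth false (rep (take d s) q ++ (take r s ++ [:: ~~ at_ s r])) i.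
  by move=> i Hi; rewrite -Htake /at_ nth_take.
have Hsr : size (rep (take d s) q) = q * d.
  by rewrite size_rep size_takel //; lia.
have HLq : L = q * d + r by rewrite Hr /q -divn_eq.
split.
  move=> i Hi. rewrite Hnth; last by lia.
  rewrite nth_cat Hsr. case: ltnP => Hiq.
    rewrite nth_rep; last by rewrite size_takel //; lia.
    rewrite size_takel; last by lia.
    by rewrite nth_take // ltn_mod; lia.
  rewrite nth_cat size_takel; last by lia.
  have -> : i - q * d < r by lia.
  rewrite nth_take; last by lia.
  have -> : i %% d = i - q * d.
    by rewrite -{1}(subnK Hiq) addnC modnMDl modn_small //; lia.
  by [].
rewrite Hnth; last by lia.
rewrite nth_cat Hsr. have -> : (L < q * d) = false by lia.
rewrite nth_cat size_takel; last by lia.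
have -> : L - q * d < r = false by lia.
have -> : L - q * d - r = 0 by lia.
by rewrite /= -Hr.
Qed.

Lemma at_rotr (s : seq bool) b j : b <= size s -> j < size s ->
  at_ (rotr b s) j = if j < b then at_ s (size s - b + j) else at_ s (j - b).
Proof.
move=> Hb Hj. rewrite /at_ /rotr /rot nth_cat size_drop.
have -> : size s - (size s - b) = b by lia.
case: ltnP => Hjb; first by rewrite nth_drop.
by rewrite nth_take //; lia.
Qed.
Definition per (f : nat -> bool) p m := forall i, i + p < m -> f i = f (i + p).

Ltac nlia := repeat match goal with
  | H : @eq bool _ ?y |- _ => lazymatch y with true => fail | _ => clear H end
  | H : ~ (@eq bool _ _) |- _ => clear H
  | H : forall _ : _, _ |- _ => clear H
  | H : per _ _ _ |- _ => clear H
  | H : context [modn _ _] |- _ => clear H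
  | H : context [gcdn _ _] |- _ => clear H
  end; lia.

Lemma per_mul f p m k i : per f p m -> i + k * p < m -> f i = f (i + k * p).
Proof.
move=> Hp; elim: k => [|k IH] H; first by rewrite mul0n addn0.
rewrite IH; last by rewrite mulSn in H; lia.
rewrite mulSn (addnC p) addnA. apply: Hp. by rewrite mulSn in H; lia.
Qed.

Lemma per_mod f g m i : per f g m -> i < m -> f i = f (i %% g).
Proof.
move=> Hp Hi. rewrite {1}(divn_eq i g) addnC.
symmetry; apply: (@per_mul f g m (i %/ g) (i %% g) Hp). by rewrite addnC -divn_eq.
Qed.


Lemma fw f : forall N p q m, p + q <= N -> 0 < p -> 0 < q -> p + q <= m + 1 ->
  per f p m -> per f q m -> per f (gcdn p q) m.
Proof.
elim=> [|N IH] p q m HN Hp Hq Hm Pp Pq; first by lia.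
wlog Hqp : p q HN Hp Hq Hm Pp Pq / q <= p.
  move=> W. case: (leqP q p) => H; first by apply: W.
  rewrite gcdnC. apply: W => //; lia.
case: (ltngtP q p) => Hc; last first.
  - by rewrite Hc gcdnn.
  - lia.
set g := gcdn p q.
have Hg : g = gcdn (p - q) q.
  by rewrite /g -{1}(subnK Hqp) gcdnC gcdnDr gcdnC.
have P' : per f g (m - q).
  rewrite Hg. apply: (IH) => //; try lia.
  - move=> i Hi. rewrite Pp; last by lia.
    rewrite [in RHS]Pq; last by lia.
    congr f; lia.
  - move=> i Hi. apply: Pq; lia.
have Hgq : g %| q by apply: dvdn_gcdr.
move=> i Hi.
rewrite (per_mod Pq); last by lia.
rewrite [in RHS](per_mod Pq); last by lia.
rewrite (per_mod P'); last by have := ltn_pmod i Hq; lia.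
rewrite [in RHS](per_mod P'); last by have := ltn_pmod (i + g) Hq; lia.
rewrite !modn_dvdm //.
by rewrite modnDr.
Qed.

Lemma fw_eq f p q m x y : 0 < p -> 0 < q -> p + q <= m + 1 ->
  per f p m -> per f q m -> x < m -> y < m ->
  x %% gcdn p q = y %% gcdn p q -> f x = f y.
Proof.
move=> Hp Hq Hm Pp Pq Hx Hy Hxy.
have P := fw (leqnn (p + q)) Hp Hq Hm Pp Pq.
by rewrite (per_mod P Hx) (per_mod P Hy) Hxy.
Qed.

Lemma modn_subdvd L k g : k <= L -> g %| k -> (L - k) %% g = L %% g.
Proof.
move=> H Hd. rewrite -{2}(subnK H) -(divnK Hd) addnC modnMDl //.
Qed.

Lemma mod_sub_eq m x y g : x <= m -> y <= m -> g %| x -> g %| y ->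
  (m - x) %% g = (m - y) %% g.
Proof. by move=> *; rewrite !modn_subdvd. Qed.

Lemma bool_neq (x : bool) : x = ~~ x -> False.
Proof. by case: x. Qed.

Lemma core (A f : nat -> bool) (n c D d2 b L : nat) :
  n = c + D -> L = c + d2 - 1 -> 2 * D <= c + 1 -> 1 <= D -> 1 <= d2 -> d2 <= D ->
  0 < b -> b < n ->
  (forall x, A (x + D) = A x) ->
  (forall j, j + d2 < L -> f j = f (j + d2)) ->
  f L <> f (L - d2) ->
  (forall j, j < b - 1 -> f j = A (n - b + j)) ->
  f (b - 1) = ~~ A (n - 1) ->
  (forall j, b <= j -> j < n -> f j = A (j - b)) ->
  (d2 < D -> (forall j, j < L -> f j = A (n - b + j)) -> False) ->
  b = d2.
Proof.
move=> HnD HL Hc2 HD1 Hd21 Hd2D Hb0 Hbn HA Hup Hub HuLft HuDef HuRgt HBc.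
have HAe : forall x y, y = x + D -> A y = A x by move=> x y ->.
have HAe2 : forall x y, y = x + D + D -> A y = A x by move=> x y ->; rewrite !HA.
case: (ltngtP (b - 1) L) => Hcase.
-
  case: (ltngtP d2 D) => Hdd; last first.
  + (* d2 = D *)
    have Hl : b - 1 < D.
      case: (ltnP (b - 1) D) => // Hge. exfalso.
      have E1 := Hup (b - 1 - D) ltac:(nlia).
      rewrite (_ : b - 1 - D + d2 = b - 1) in E1; last by nlia.
      rewrite HuDef HuLft in E1; last by nlia.
      have Heq : A (n - 1) = A (n - b + (b - 1 - D)) by apply: HAe; nlia.
      rewrite Heq in E1. exact: bool_neq E1.
    have Hr : L - b < D.
      case: (ltnP (L - b) D) => // Hge. exfalso.
      apply: Hub.
      rewrite HuRgt; [|nlia|nlia]. rewrite HuRgt; [|nlia|nlia].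
      apply: HAe; nlia.
    nlia.
  + (* d2 > D *) nlia.
  + (* d2 < D *)
    exfalso.
    have HR' : forall j, b + j < n -> f (b + j) = A j.
      move=> j Hj. rewrite HuRgt; [|nlia|nlia]. by rewrite addKn.
    have Hl : b - 1 <= D + d2 - 2.
      case: (leqP (b - 1) (D + d2 - 2)) => // Hgt. exfalso.
      have Pd : per f D (b - 1).
        move=> k Hk. rewrite HuLft; [|nlia]. rewrite HuLft; [|nlia].
        apply/esym/HAe; nlia.
      have Pd2 : per f d2 (b - 1) by move=> k Hk; apply: Hup; nlia.
      have HDL : D + d2 <= b - 1 + 1 by nlia.
      have E := fw_eq (x := b - 1 - D) (y := b - 1 - d2) HD1 Hd21 HDL Pd Pd2.
      have Hm : (b - 1 - D) %% gcdn D d2 = (b - 1 - d2) %% gcdn D d2.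
        by apply: mod_sub_eq; rewrite ?dvdn_gcdl ?dvdn_gcdr //; nlia.
      have {}E := E ltac:(nlia) ltac:(nlia) Hm.
      have E0 := Hup (b - 1 - d2) ltac:(nlia).
      rewrite (_ : b - 1 - d2 + d2 = b - 1) in E0; last by nlia.
      rewrite HuDef -E HuLft in E0; last by nlia.
      have Heq : A (n - 1) = A (n - b + (b - 1 - D)) by apply: HAe; nlia.
      rewrite Heq in E0. exact: bool_neq E0.
    have Hr : L - b <= D + d2 - 2.
      case: (leqP (L - b) (D + d2 - 2)) => // Hgt. exfalso.
      set F := fun j => f (b + j).
      have Pd : per F D (L - b).
        move=> k Hk. rewrite /F HR'; [|nlia]. rewrite HR'; [|nlia].
        by rewrite HA.
      have Pd2 : per F d2 (L - b).
        move=> k Hk. rewrite /F Hup; [|nlia]. by rewrite addnA.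
      have HDL : D + d2 <= L - b + 1 by nlia.
      have E := fw_eq (x := L - b - D) (y := L - b - d2) HD1 Hd21 HDL Pd Pd2.
      have Hm : (L - b - D) %% gcdn D d2 = (L - b - d2) %% gcdn D d2.
        by apply: mod_sub_eq; rewrite ?dvdn_gcdl ?dvdn_gcdr //; nlia.
      have {}E := E ltac:(nlia) ltac:(nlia) Hm.
      rewrite /F in E.
      apply: Hub.
      have e1 : f L = A (L - b - D).
        rewrite (_ : L = b + (L - b)); last by nlia.
        rewrite HR'; last by nlia.
        apply: HAe; nlia.
      have e2 : f (L - d2) = f (b + (L - b - d2)) by congr f; nlia.
      rewrite e1 e2 -E HR' //; nlia.
    have Hl2 : d2 <= b - 1 by nlia.
    have Hr2 : d2 <= L - b by nlia.
    have P := Hup (b - 1 - d2) ltac:(nlia).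
    rewrite (_ : b - 1 - d2 + d2 = b - 1) in P; last by nlia.
    rewrite HuDef HuLft in P; last by nlia.
    have Q := Hup (b - 1) ltac:(nlia).
    rewrite HuDef HuRgt in Q; [|nlia|nlia].
    case: (leqP c (D + d2)) => Hcd.
      have Heq : A (n - 1) = A (b - 1 + d2 - b) by apply: HAe2; nlia.
      rewrite Heq in Q. exact: bool_neq (esym Q).
    have R := Hup (b - 1 + (c - d2 - D)) ltac:(nlia).
    rewrite HuRgt in R; [|nlia|nlia]. rewrite HuRgt in R; [|nlia|nlia].
    have e1 : A (n - 1) = A (b - 1 + (c - d2 - D) + d2 - b) by apply: HAe2; nlia.
    have e2 : A (n - b + (b - 1 - d2)) = A (b - 1 + (c - d2 - D) - b) by apply: HAe2; nlia.
    rewrite e2 R -e1 in P. exact: bool_neq P.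
-
  exfalso.
  have Pd : per f D L.
    move=> k Hk. rewrite HuLft; [|nlia]. rewrite HuLft; [|nlia].
    apply/esym/HAe; nlia.
  have Pd2 : per f d2 L by move=> k Hk; apply: Hup.
  have HDL : D + d2 <= L + 1 by nlia.
  have E := fw_eq (x := L - D) (y := L - d2) HD1 Hd21 HDL Pd Pd2.
  apply: Hub.
  rewrite -E; [| nlia | nlia |]; last first.
    by apply: mod_sub_eq; rewrite ?dvdn_gcdl ?dvdn_gcdr //; nlia.
  rewrite HuLft; [|nlia]. rewrite HuLft; [|nlia].
  apply: HAe; nlia.
-
  exfalso. apply: HBc; first by nlia.
  move=> j Hj. apply: HuLft; nlia.
Qed.

Lemma A_mulD (A : nat -> bool) D : (forall x, A (x + D) = A x) ->
  forall m x, A (x + m * D) = A x.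
Proof.
move=> HA; elim=> [|m IH] x; first by rewrite mul0n addn0.
by rewrite mulSn (addnC D) addnA HA IH.
Qed.

Theorem corollary1 (n c t1 : nat) (s : seq bool) :
  ceildiv (2 * n - 1) 3 <= c ->
  inB n c (n - c) s ->
  is_add s (n - c) t1 ->
  forall b d2 t2 : nat,
    0 < b -> b < n ->
    inB n c d2 (Rshift b s) ->
    is_add (Rshift b s) d2 t2 ->
    t1 <= t2 ->
    b = d2.
Proof.
move=> Hc HB1 _ b d2 t2 Hb0 Hbn HB2 _ _.
have [HsP HsL] := inB_struct HB1.
have [HuP HuL] := inB_struct HB2.
case: HB1 => [[Hn2 HD1 HDm] [Hsz _ Hapa _]].
case: HB2 => [[_ Hd21 Hd2m] [Husz _ _ _]].
move: HDm Hd2m; rewrite !leq_min => /andP [HDm1 HDm2] /andP [Hd2m1 Hd2m2].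
rewrite /ceildiv in Hc.
have Hcn : c < n by lia.
have Hc2 : 2 * (n - c) <= c + 1 by lia.
clear Hc.
move: HsP HsL HD1 HDm1 HDm2 Hapa Hc2 Hd2m1.
move HDdef: (n - c) => D HsP HsL HD1 HDm1 HDm2 Hapa Hc2 Hd2m1.
have HnD : n = c + D by nlia.
pose A := fun x => at_ s (x %% D).
have HsA : forall i, i < n - 1 -> at_ s i = A i.
  move=> i Hi; apply: HsP; nlia.
have HsN : at_ s (n - 1) = ~~ A (n - 1).
  by rewrite /A (_ : n - 1 = c + D - 1); [exact: HsL | nlia].
have HA : forall x, A (x + D) = A x by move=> x; rewrite /A modnDr.
move: HuP HuL Husz.
move Hudef: (Rshift b s) => u HuP HuL Husz.
move: HuP HuL.
move HL: (c + d2 - 1) => L HuP HuL.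
have Hup : forall j, j + d2 < L -> at_ u j = at_ u (j + d2).
  move=> j Hj. rewrite HuP; last by nlia. rewrite [in RHS]HuP; last by nlia.
  by rewrite modnDr.
have Hub : at_ u L <> at_ u (L - d2).
  have E1 : at_ u (L - d2) = at_ u (L %% d2).
    rewrite HuP; last by nlia.
    by rewrite modn_subdvd ?dvdnn //; nlia.
  rewrite E1 HuL => E. exact: (bool_neq (esym E)).
have Hrot : forall j, j < n -> at_ u j = if j < b then at_ s (n - b + j) else at_ s (j - b).
  move=> j Hj. rewrite -Hudef /Rshift at_rotr; rewrite ?Hsz //; nlia.
have HuLft : forall j, j < b - 1 -> at_ u j = A (n - b + j).
  move=> j Hj. rewrite Hrot; last by nlia.
  have -> : j < b by nlia.
  apply: HsA; nlia.
have HuDef : at_ u (b - 1) = ~~ A (n - 1).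
  rewrite Hrot; last by nlia.
  have -> : b - 1 < b by nlia.
  rewrite -HsN; congr at_; nlia.
have HuRgt : forall j, b <= j -> j < n -> at_ u j = A (j - b).
  move=> j H1 H2. rewrite Hrot //. have -> : j < b = false by nlia.
  apply: HsA; nlia.
apply: (core (A := A) (f := at_ u) HnD (esym HL) Hc2 HD1 Hd21 Hd2m1 Hb0 Hbn HA Hup Hub HuLft HuDef HuRgt).
move=> Hdd Hleft.
set g := gcdn D d2.
have Pd : per (at_ u) D L.
  move=> k Hk. rewrite Hleft; [|nlia]. rewrite Hleft; [|nlia].
  by rewrite addnA HA.
have Pd2 : per (at_ u) d2 L by move=> k Hk; apply: Hup.
have HDL : D + d2 <= L + 1 by nlia.
have Pg : per (at_ u) g L := fw (leqnn (D + d2)) HD1 Hd21 HDL Pd Pd2.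
have Hg0 : 0 < g by rewrite /g gcdn_gt0 HD1.
have Hgd2 : g <= d2 by apply: dvdn_leq => //; apply: dvdn_gcdr.
have HgD : g %| D by apply: dvdn_gcdl.
have HAg : forall j, A (n - b + j) = A (n - b + j + g).
  move=> j; elim: j {-2}j (leqnn j) => [|N IH] j Hj.
    have Hj0 : j = 0 by nlia.
    rewrite Hj0 -Hleft; [|nlia]. rewrite -addnA -Hleft; [|nlia].
    apply: Pg; nlia.
  case: (ltnP (j + g) L) => Hjg.
    rewrite -Hleft; [|nlia]. rewrite -addnA -Hleft; [|nlia].
    apply: Pg; nlia.
  have -> : n - b + j = (n - b + (j - D)) + D by nlia.
  have -> : n - b + (j - D) + D + g = (n - b + (j - D) + g) + D by nlia.
  rewrite !HA. apply: IH; nlia.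
have HAk : forall k, A k = A (k + g).
  move=> k.
  have HM := A_mulD HA.
  rewrite -[in LHS](HM (n - b) k) -[in RHS](HM (n - b) (k + g)).
  have HMb : n - b <= (n - b) * D by rewrite leq_pmulr.
  have -> : k + (n - b) * D = n - b + (k + ((n - b) * D - (n - b))) by nlia.
  have -> : k + g + (n - b) * D = n - b + (k + ((n - b) * D - (n - b))) + g by nlia.
  by apply: HAg.
have HAmod : forall k, A k = A (k %% g).
  move=> k. rewrite {1}(divn_eq k g) addnC.
  elim: (k %/ g) => [|m IH]; first by rewrite mul0n addn0.
  by rewrite mulSn (addnC g) addnA -HAk.
apply: Hapa.
exists g; split.
- exact: Hg0.
- rewrite size_takel; nlia.
- by rewrite size_takel; [|nlia].
- exists (take g s); split; first by rewrite size_takel; nlia.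
  rewrite size_takel; last by nlia.
  apply: (@eq_from_nth _ false).
    by rewrite size_rep !size_takel ?divnK //; nlia.
  move=> i Hi. rewrite size_takel in Hi; last by nlia.
  rewrite nth_take // nth_rep; last by rewrite size_takel ?divnK //; nlia.
  rewrite size_takel; last by nlia.
  have Hig : i %% g < g by rewrite ltn_mod.
  rewrite nth_take //.
  rewrite -/(at_ s i) -/(at_ s (i %% g)) HsA; [|nlia]. rewrite HsA; [|nlia].
  exact: HAmod.
Qed.
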